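(* Let $q\ge 3$ be a prime power and $n\ge 2d\ge 2$. For all $0\le i\le d-1$ and $1\le j\le d$, $$|G_j(i+1)|<|G_j(i)|.$$
   Context: For integers $m\ge 0$ and $l$, ${m\brack l}=\prod_{t=1}^{l}\frac{q^{m-t+1}-1}{q^t-1}$ for $l\ge0$ and $0$ for $l<0$. For $0\le i,j\le d$, $$G_j(i)=\sum_{h=\max\{0,i-j\}}^{\min\{i,d-j\}}(-1)^{i-h}q^{j(j-i+h)+\binom{i-h}{2}}{i\brack h}{d-h\brack j}{n-d-i+h\brack n-d-j};$$ $G_j(i)$ ($0\le i\le d$) are the eigenvalues of the Grassmann graph $G_q(n,d,j)$, whose vertices are the $d$-dimensional subspaces of $\mathbb F_q^n$, two being adjacent iff their intersection has dimension $d-j$. *)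

(* Defs.v *)
From mathcomp Require Import all_boot all_order all_algebra.
Set Implicit Arguments. Unset Strict Implicit. Unset Printing Implicit Defensive.
Import Order.TTheory GRing.Theory Num.Theory.
Local Open Scope ring_scope.

(* The exponent
   m+1-t is truncated in nat; this only matters when t > m+1, in which case
   the factor t = m+1 (exponent 0) already makes the product 0, as in the
   informal formula. *)
Definition gauss (q : nat) (m l : nat) : rat :=
  \prod_(1 <= t < l.+1) (((q%:R : rat) ^+ (m.+1 - t)%N - 1) / ((q%:R : rat) ^+ t - 1)).

(* Eigenvalue G_j(i) of the Grassmann graph G_q(n,d,j).
   The sum runs over h from max{0,i-j} = (i-j)%N (truncated) to min{i,d-j}.
   On this range h >= i-j so j-i+h = (j+h-i)%N, and n-d-i+h >= 0 because
   i <= d <= n-d in the intended range. *)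
Definition G (q n d j i : nat) : rat :=
  \sum_((i - j)%N <= h < (minn i (d - j)).+1)
    (-1) ^+ (i - h)%N * (q%:R : rat) ^+ (j * (j + h - i) + 'C(i - h, 2))%N
    * gauss q i h * gauss q (d - h) j * gauss q (n - d - i + h) (n - d - j).

(* Main.v *)
Require Import Defs.
From mathcomp Require Import all_boot all_order all_algebra.
From mathcomp Require Import zify ring lra.
Import Order.TTheory GRing.Theory Num.Theory.
Local Open Scope ring_scope.


Lemma pow_gt1 (x : rat) k : 1 < x -> (0 < k)%N -> 1 < x ^+ k.
Proof. by move=> x1 k0; rewrite exprn_egt1 // -lt0n. Qed.

Lemma pow_sub1_gt0 (x : rat) k : 1 < x -> (0 < k)%N -> 0 < x ^+ k - 1.
Proof. by move=> x1 k0; rewrite subr_gt0 pow_gt1. Qed.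

Lemma pow_sub1_neq0 (x : rat) k : 1 < x -> (0 < k)%N -> x ^+ k - 1 != 0.
Proof. by move=> x1 k0; rewrite gt_eqF // pow_sub1_gt0. Qed.

Lemma gauss0 q m : gauss q m 0 = 1.
Proof. by rewrite /gauss big_geq. Qed.

Lemma gaussS_l q m l : (1 < q)%N ->
  gauss q m l.+1 * ((q%:R : rat) ^+ l.+1 - 1) = gauss q m l * ((q%:R : rat) ^+ (m - l) - 1).
Proof.
move=> q1; have Q1 : 1 < (q%:R : rat) by rewrite ltr1n.
rewrite /gauss big_nat_recr //= subSS -mulrA.
by rewrite mulfVK //; exact: pow_sub1_neq0.
Qed.

Lemma gauss_gt0 q m l : (1 < q)%N -> (l <= m)%N -> 0 < gauss q m l.
Proof.
move=> q1; have Q1 : 1 < (q%:R : rat) by rewrite ltr1n.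
elim: l => [|l IH] lm; first by rewrite gauss0.
have := gaussS_l q m l q1 => e.
have h1 : 0 < (q%:R : rat) ^+ l.+1 - 1 by exact: pow_sub1_gt0.
have h2 : 0 < gauss q m l * ((q%:R : rat) ^+ (m - l) - 1).
  apply: mulr_gt0; first by apply: IH; lia.
  apply: pow_sub1_gt0 => //; lia.
by rewrite -e pmulr_lgt0 in h2.
Qed.

Lemma gaussS_m q m l : (1 < q)%N -> (l <= m)%N ->
  gauss q m.+1 l * ((q%:R : rat) ^+ (m.+1 - l) - 1) = gauss q m l * ((q%:R : rat) ^+ m.+1 - 1).
Proof.
move=> q1; have Q1 : 1 < (q%:R : rat) by rewrite ltr1n.
elim: l => [|l IH] lm; first by rewrite !gauss0 subn0.
have ne : (q%:R : rat) ^+ l.+1 - 1 != 0 by exact: pow_sub1_neq0.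
apply: (mulIf ne).
rewrite mulrAC (gaussS_l q m.+1 l q1) -mulrA [_ * (_ ^+ _ - 1)]mulrC mulrA.
have -> : (m.+1 - l.+1 = m - l)%N by lia.
rewrite mulrAC IH; last lia.
by rewrite [RHS]mulrAC (gaussS_l q m l q1) mulrAC.
Qed.

Lemma gauss_nn q m : (1 < q)%N -> gauss q m m = 1.
Proof.
move=> q1; have Q1 : 1 < (q%:R : rat) by rewrite ltr1n.
elim: m => [|m IH]; first by rewrite gauss0.
have ne : (q%:R : rat) ^+ m.+1 - 1 != 0 by exact: pow_sub1_neq0.
apply: (mulIf ne); rewrite mul1r (gaussS_l q m.+1 m q1).
have := gaussS_m q m m q1 (leqnn m); by rewrite IH mul1r subSn // subnn.
Qed.


Definition s (q n d j I h : nat) : rat :=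
  (q%:R : rat) ^+ (j * (j + h - I) + 'C(I - h, 2))%N
    * gauss q I h * gauss q (d - h) j * gauss q (n - d - I + h) (n - d - j).

Lemma G_sum q n d j I : G q n d j I =
  \sum_((I - j)%N <= h < (minn I (d - j)).+1) (-1) ^+ (I - h) * s q n d j I h.
Proof. by apply: eq_bigr => h _; rewrite /s !mulrA. Qed.

Lemma alt_sum (f : nat -> rat) (lo m : nat) :
  (forall h, (lo <= h < lo + m)%N -> 0 <= f h <= f h.+1) -> 0 <= f lo ->
  let T := \sum_(lo <= h < (lo + m)%N.+1) (-1) ^+ (lo + m - h)%N * f h in
  0 <= T <= f (lo + m)%N /\ ((0 < m)%N -> f (lo + m)%N - f (lo + m).-1%N <= T).
Proof.
move=> mono f0; elim: m mono => [|m IH] mono /=.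
  rewrite addn0 big_nat1 subnn expr0 mul1r f0 /=; split => //.
have [/andP[T0 T1] _] := IH (fun h hh => mono h ltac:(lia)).
rewrite addnS big_nat_recr /=; last lia.
rewrite subnn expr0 mul1r.
rewrite (eq_big_nat _ _ (F2 := fun h => - ((-1) ^+ (lo + m - h)%N * f h))); last first.
  by move=> h hh; rewrite subSn; [rewrite exprS mulN1r mulNr | lia].
rewrite sumrN.
set T := \sum_(_ <= _ < _) _ in T0 T1 *.
have := mono (lo + m)%N ltac:(lia) => /andP[_ fm].
split; last by move=> _ /=; lra.
apply/andP; split; lra.
Qed.


Lemma algMono (Q P Qu E a b c A' B C' X Y W z1 z2 sh sh1 : rat) :
  3 <= Q -> 0 < P -> 1 <= Qu -> Q <= E -> 0 < a -> 0 < b -> 0 < c ->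
  1 <= X -> Q <= Y -> Q <= W -> 1 <= z1 -> 1 <= z2 ->
  X * Y <= Q * (Q * z1 * z2) ->
  A' * (Y - 1) = a * (Q * z1 - 1) ->
  B * (W - 1) = b * (X - 1) ->
  C' * (E - 1) = c * (Q * z2 - 1) ->
  sh = P * Qu * a * B * c -> sh1 = P * (Qu * E) * A' * b * C' ->
  0 <= sh <= sh1.
Proof.
move=> Q3 P0 Qu1 QE a0 b0 c0 X1 QY QW z11 z21 XY eA eB eC -> ->.
have Y1 : 0 < Y - 1 by lra.
have W1 : 0 < W - 1 by lra.
have E1 : 0 < E - 1 by lra.
have eA' : A' = a * (Q * z1 - 1) / (Y - 1) by rewrite -eA mulfK // gt_eqF.
have eB' : B = b * (X - 1) / (W - 1) by rewrite -eB mulfK // gt_eqF.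
have eC' : C' = c * (Q * z2 - 1) / (E - 1) by rewrite -eC mulfK // gt_eqF.
have B0 : 0 <= B by rewrite eB'; apply: divr_ge0; [apply: mulr_ge0; lra | lra].
apply/andP; split.
  by apply: mulr_ge0; [apply: mulr_ge0; [apply: mulr_ge0; [apply: mulr_ge0|]|]|]; lra.
rewrite eA' eB' eC'.
set K := P * Qu * a * b * c.
have K0 : 0 < K by rewrite /K; apply: mulr_gt0 => //; apply: mulr_gt0 => //; apply: mulr_gt0 => //; apply: mulr_gt0 => //; lra.
have -> : P * Qu * a * (b * (X - 1) / (W - 1)) * c = K * ((X - 1) / (W - 1)) by rewrite /K; field; lra.
have -> : P * (Qu * E) * (a * (Q * z1 - 1) / (Y - 1)) * b * (c * (Q * z2 - 1) / (E - 1))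
   = K * (E * (Q * z1 - 1) * (Q * z2 - 1) / ((Y - 1) * (E - 1))) by rewrite /K; field; lra.
rewrite ler_pM2l // ler_pdivrMr // mulrAC ler_pdivlMr; last by apply: mulr_gt0.
have h1 : (Q - 1) * (Q * z1 * z2 - 1) <= (Q * z1 - 1) * (Q * z2 - 1).
  have : 0 <= Q * ((z1 - 1) * (z2 - 1)) by apply: mulr_ge0; [lra | apply: mulr_ge0; lra].
  lra.
have h2 : (X - 1) * (Y - 1) <= Q * (Q * z1 * z2) - Q.
  have : 0 <= (X - 1) * (Y - Q) by apply: mulr_ge0; lra.
  lra.
have h3 : Q * (Q * z1 * z2 - 1) <= (Q - 1) * (Q - 1) * (Q * z1 * z2 - 1).
  apply: ler_wpM2r.
    have zz : 1 <= z1 * z2 by rewrite -[1]mul1r; apply: ler_pM => //; lra.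
    have : 3 <= Q * (z1 * z2) by rewrite -[3]mulr1; apply: ler_pM => //; lra.
    rewrite mulrA; lra.
  nra.
have h4 : (Q - 1) * (Q - 1) * (Q * z1 * z2 - 1) <= (W - 1) * ((Q * z1 - 1) * (Q * z2 - 1)).
  rewrite -mulrA; apply: ler_pM.
  - lra.
  - apply: mulr_ge0; first lra.
    have : 1 <= z1 * z2 by rewrite -[1]mul1r; apply: ler_pM => //; lra.
    nra.
  - lra.
  - exact: h1.
have h5 : (X - 1) * (Y - 1) <= (W - 1) * ((Q * z1 - 1) * (Q * z2 - 1)) by lra.
have h6 : 0 <= (X - 1) * (Y - 1) by apply: mulr_ge0; lra.
have : (X - 1) * (Y - 1) * (E - 1) <= (W - 1) * ((Q * z1 - 1) * (Q * z2 - 1)) * E.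
  apply: ler_pM => //; lra.
move=> h7.
have -> : (X - 1) * ((Y - 1) * (E - 1)) = (X - 1) * (Y - 1) * (E - 1) by ring.
have -> : E * (Q * z1 - 1) * (Q * z2 - 1) * (W - 1) = (W - 1) * ((Q * z1 - 1) * (Q * z2 - 1)) * E by ring.
exact: h7.
Qed.

Lemma mono_s q n d j I h : (3 <= q)%N -> (1 <= j)%N -> (2 * d <= n)%N ->
  (I <= d)%N -> (h < I)%N -> (h.+1 <= d - j)%N -> (I - j <= h)%N ->
  0 <= s q n d j I h <= s q n d j I h.+1.
Proof.
move=> q3 j1 dn Id hI hdj Ijh.
have q1 : (1 < q)%N by lia.
set Q := (q%:R : rat).
have Q3 : 3 <= Q by rewrite /Q (_ : 3 = 3%:R :> rat) // ler_nat.
have Q1 : 1 <= Q by lra.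
set N := (n - d)%N.
set v := (j + h - I)%N.
set u := (I - h.+1)%N.
set M := (n - d - I + h)%N.
have eC := gaussS_m q M (N - j) q1 ltac:(lia).
have eA := gaussS_l q I h q1.
have eB := gaussS_m q (d - h.+1) j q1 ltac:(lia).
have e1 : (d - h.+1).+1 = (d - h)%N by lia.
rewrite e1 in eB.
have e2 : (M.+1 - (N - j))%N = v.+1 by lia.
rewrite e2 in eC.
apply: (algMono Q (Q ^+ (j * v + 'C(u, 2))) (Q ^+ u) (Q ^+ v.+1)
  (gauss q I h) (gauss q (d - h.+1) j) (gauss q M (N - j))
  (gauss q I h.+1) (gauss q (d - h) j) (gauss q M.+1 (N - j))
  (Q ^+ (d - h)) (Q ^+ h.+1) (Q ^+ (d - h - j)) (Q ^+ u) (Q ^+ M)).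
- exact: Q3.
- by apply: exprn_gt0; lra.
- exact: exprn_ege1.
- rewrite -{1}(expr1 Q); apply: ler_weXn2l => //; lia.
- by apply: gauss_gt0; lia.
- by apply: gauss_gt0; lia.
- by apply: gauss_gt0; lia.
- exact: exprn_ege1.
- rewrite -{1}(expr1 Q); apply: ler_weXn2l => //; lia.
- rewrite -{1}(expr1 Q); apply: ler_weXn2l => //; lia.
- exact: exprn_ege1.
- exact: exprn_ege1.
- rewrite -exprD (_ : Q * (Q * Q ^+ u * Q ^+ M) = Q ^+ (u + M).+2); last by rewrite !exprS exprD; ring.
  apply: ler_weXn2l => //; lia.
- by rewrite -exprS (_ : u.+1 = I - h)%N //; lia.
- exact: eB.
- by rewrite -exprS.
- rewrite /s -exprD; congr (_ ^+ _ * _ * _ * _).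
  rewrite (_ : (I - h = u.+1)%N); last lia.
  rewrite binS bin1 addnA; lia.
- rewrite /s -!exprD (addnS (n - d - I) h); congr (_ ^+ _ * _ * _ * _).
  have hv : (j + h.+1 - I = v.+1)%N by rewrite /v; lia.
  rewrite hv mulnS -/u.
  have hj : j = (u + v.+1)%N by lia.
  rewrite {1}hj; lia.
Qed.


Lemma algA (Q P E al io M X X1 X2 GN Y sA sB W : rat) :
  3 <= Q -> 0 < P -> Q <= E -> Q <= al -> 1 <= io -> io * (E * al) <= M ->
  0 < X -> 0 < Y ->
  X1 * (al - 1) = X * (E * al - 1) -> X2 * (al * Q - 1) = X1 * (E * al * Q - 1) ->
  GN * (E - 1) = Y * (M - 1) ->
  sA = P * E * X1 * GN -> sB = P * E * X * GN -> W = P * ((io - 1) / (Q - 1)) * X2 * Y ->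
  sB + W < sA.
Proof.
move=> Q3 P0 QE Qa io1 iM X0 Y0 e1 e2 e3 -> -> ->.
have a1 : 0 < al - 1 by lra.
have E1 : 0 < E - 1 by lra.
have aQ : 0 < al * Q - 1 by nra.
have eX1 : X1 = X * (E * al - 1) / (al - 1) by rewrite -e1 mulfK // gt_eqF.
have eX2 : X2 = X1 * (E * al * Q - 1) / (al * Q - 1) by rewrite -e2 mulfK // gt_eqF.
have eGN : GN = Y * (M - 1) / (E - 1) by rewrite -e3 mulfK // gt_eqF.
rewrite eX2 eX1 eGN -subr_gt0.
set F := E * al in iM *.
have F9 : 9 <= F by rewrite /F; nra.
have M9 : 9 <= M.
  have : F <= io * F by rewrite ler_peMl //; lra.
  lra.
have -> : P * E * (X * (F - 1) / (al - 1)) * (Y * (M - 1) / (E - 1)) -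
   (P * E * X * (Y * (M - 1) / (E - 1)) +
    P * ((io - 1) / (Q - 1)) * (X * (F - 1) / (al - 1) * (F * Q - 1) / (al * Q - 1)) * Y)
   = (P * X * Y / ((al - 1) * (Q - 1) * (al * Q - 1))) *
     (E * (M - 1) * al * (Q - 1) * (al * Q - 1) - (io - 1) * (F - 1) * (F * Q - 1)).
  rewrite /F; field; repeat split; lra.
apply: mulr_gt0.
  apply: divr_gt0; first by apply: mulr_gt0 => //; apply: mulr_gt0.
  by apply: mulr_gt0 => //; apply: mulr_gt0 => //; lra.
rewrite subr_gt0.
have h1 : (io - 1) * (F - 1) <= M - 1 by nra.
have h2 : F * Q - 1 < F * ((Q - 1) * (al * Q - 1)).
  have : Q < (Q - 1) * (al * Q - 1) by nra.
  nra.
have h3 : 0 <= (io - 1) * (F - 1) by apply: mulr_ge0; lra.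
have -> : E * (M - 1) * al * (Q - 1) * (al * Q - 1) = (M - 1) * (F * ((Q - 1) * (al * Q - 1))) by rewrite /F; ring.
apply: (le_lt_trans (y := (M - 1) * (F * Q - 1))).
  by apply: ler_wpM2r => //; nra.
by rewrite ltr_pM2l //; lra.
Qed.

Lemma algB (Q P A B C MK Z Y GNK Gi1 sA sB W : rat) :
  3 <= Q -> 0 < P -> 1 <= A -> Q <= B -> 1 <= C -> C * B <= MK ->
  0 < Z -> 0 < Y ->
  Gi1 * (A * Q - 1) = Z * (C * A * Q - 1) -> GNK * (B - 1) = Y * (MK - 1) ->
  sA = P * (A * B) * Z * GNK -> sB = P * A * Gi1 * Y ->
  W = P * A * (Z * (C - 1) / (A * Q - 1)) * ((A * B * Q - 1) / (Q - 1)) * Y ->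
  sB + W < sA.
Proof.
move=> Q3 P0 A1 QB C1 CM Z0 Y0 e1 e2 -> -> ->.
have B1 : 0 < B - 1 by lra.
have U2 : 2 <= A * Q - 1 by nra.
have eG : Gi1 = Z * (C * A * Q - 1) / (A * Q - 1) by rewrite -e1 mulfK // gt_eqF; lra.
have eK : GNK = Y * (MK - 1) / (B - 1) by rewrite -e2 mulfK // gt_eqF.
rewrite eG eK -subr_gt0.
have -> : P * (A * B) * Z * (Y * (MK - 1) / (B - 1)) -
  (P * A * (Z * (C * A * Q - 1) / (A * Q - 1)) * Y +
   P * A * (Z * (C - 1) / (A * Q - 1)) * ((A * B * Q - 1) / (Q - 1)) * Y)
  = (P * A * Z * Y / ((B - 1) * (A * Q - 1) * (Q - 1))) *
    (B * (MK - 1) * (A * Q - 1) * (Q - 1) - (B - 1) * (Q - 1) * (C * A * Q - 1)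
      - (B - 1) * (C - 1) * (A * B * Q - 1)).
  field; repeat split; lra.
apply: mulr_gt0.
  apply: divr_gt0; first by apply: mulr_gt0 => //; apply: mulr_gt0 => //; apply: mulr_gt0 => //; lra.
  by apply: mulr_gt0; [apply: mulr_gt0|]; lra.
set U := A * Q - 1 in U2 *.
have eAQ : A * Q = U + 1 by rewrite /U; ring.
have -> : C * A * Q - 1 = C * U + (C - 1) by rewrite -mulrA eAQ; ring.
have -> : A * B * Q - 1 = B * U + B - 1 by rewrite mulrAC eAQ; ring.
have hM : B * (C * B - 1) * U * (Q - 1) <= B * (MK - 1) * U * (Q - 1).
  apply: ler_wpM2r; first lra.
  apply: ler_wpM2r; first lra.
  apply: ler_wpM2l; lra.
have k1 : 0 <= (Q - 1) * U * (B - 1) - (B * U + B - 1).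
  have t1 : 0 <= (Q - 3) * (U * (B - 1)) by apply: mulr_ge0; [lra | apply: mulr_ge0; lra].
  have t2 : 1 <= (U - 1) * (B - 2) by rewrite -[1]mul1r; apply: ler_pM; lra.
  have -> : (Q - 1) * U * (B - 1) - (B * U + B - 1) = (Q - 3) * (U * (B - 1)) + ((U - 1) * (B - 2) - 1) by ring.
  lra.
have k2 : 0 <= (C - 1) * (Q - 1) * (U * B - B + 1).
  apply: mulr_ge0; [apply: mulr_ge0|]; try lra.
  have : 0 <= (U - 1) * B by apply: mulr_ge0; lra.
  lra.
have k3 : 0 <= C * ((Q - 1) * U * (B - 1) - (B * U + B - 1)) by apply: mulr_ge0; lra.
have k4 : 0 < (B - 1) * (C * ((Q - 1) * U * (B - 1) - (B * U + B - 1)) + (B * U + B - 1)).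
  apply: mulr_gt0 => //; nra.
have iden : B * (C * B - 1) * U * (Q - 1) - (B - 1) * (Q - 1) * (C * U + (C - 1))
      - (B - 1) * (C - 1) * (B * U + B - 1)
   = (B - 1) * (C * ((Q - 1) * U * (B - 1) - (B * U + B - 1)) + (B * U + B - 1))
     + (C - 1) * (Q - 1) * (U * B - B + 1) by ring.
lra.
Qed.


Definition WA q n d j i : rat :=
  (q%:R : rat) ^+ (j * (j - 1)) * (((q%:R : rat) ^+ i - 1) / ((q%:R : rat) - 1))
  * gauss q (d - i).+1 j * gauss q (n - d).-1 (n - d - j).

Lemma Q3 q : (3 <= q)%N -> 3 <= (q%:R : rat).
Proof. by move=> q3; rewrite (_ : 3 = 3%:R :> rat) // ler_nat. Qed.

Lemma powQ (x : rat) k : 1 <= x -> (0 < k)%N -> x <= x ^+ k.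
Proof. by move=> x1 k0; rewrite -{1}(expr1 x); apply: ler_weXn2l. Qed.

Lemma caseA q n d j i : (3 <= q)%N -> (1 <= j)%N -> (i.+1 + j <= d)%N -> (2 * d <= n)%N ->
  s q n d j i.+1 i.+1 + WA q n d j i < s q n d j i i.
Proof.
move=> q3 j1 hd dn.
have q1 : (1 < q)%N by lia.
set Q := (q%:R : rat).
have Q3' : 3 <= Q := Q3 q q3.
have Q1 : 1 <= Q by lra.
set N := (n - d)%N.
have e1 := gaussS_m q (d - i.+1) j q1 ltac:(lia).
rewrite (_ : (d - i.+1).+1 = d - i)%N in e1; last lia.
have e2 := gaussS_m q (d - i) j q1 ltac:(lia).
have e3 := gaussS_m q N.-1 (N - j) q1 ltac:(lia).
rewrite (_ : N.-1.+1 = N)%N in e3; last lia.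
rewrite (_ : (N - (N - j) = j)%N) in e3; last lia.
apply: (algA Q (Q ^+ (j * (j - 1))) (Q ^+ j) (Q ^+ (d - i - j)) (Q ^+ i)
  (Q ^+ N) (gauss q (d - i.+1) j) (gauss q (d - i) j)
  (gauss q (d - i).+1 j) (gauss q N (N - j)) (gauss q N.-1 (N - j)) _ _ _ Q3').
- by apply: exprn_gt0; lra.
- exact: powQ.
- apply: powQ => //; lia.
- exact: exprn_ege1.
- rewrite -!exprD; apply: ler_weXn2l => //; lia.
- by apply: gauss_gt0; lia.
- by apply: gauss_gt0; lia.
- by rewrite -exprD subnKC //; lia.
- rewrite (_ : ((d - i).+1 - j = (d - i - j).+1)%N) in e2; last lia.
  rewrite -(exprD Q j) subnKC; last lia.
  by rewrite -!exprSr.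
- exact: e3.
- have hjj : (j * (j - 1) + j = j * j)%N by rewrite -{3}(muln1 j) -mulnDr subnK.
  rewrite /s -exprD hjj subnn addnK gauss_nn // subnK; last lia.
  by rewrite addn0 mulr1.
- have hjj : (j * (j - 1) + j = j * j)%N by rewrite -{3}(muln1 j) -mulnDr subnK.
  rewrite /s -exprD hjj subnn addnK gauss_nn // subnK; last lia.
  by rewrite addn0 mulr1.
- by [].
Qed.

Lemma WA_eq q n d j i : (3 <= q)%N -> (1 <= j)%N -> (i.+2 + j <= d)%N -> (2 * d <= n)%N ->
  s q n d j i.+1 i = WA q n d j i.+1.
Proof.
move=> q3 j1 hd dn.
have q1 : (1 < q)%N by lia.
have Q1 : 1 < (q%:R : rat) by rewrite ltr1n.
rewrite /s /WA.
have e := gaussS_m q i i q1 (leqnn i).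
rewrite gauss_nn // mul1r subSn // subnn expr1 in e.
have -> : gauss q i.+1 i = ((q%:R : rat) ^+ i.+1 - 1) / ((q%:R : rat) - 1).
  by rewrite -e mulfK // subr_eq0 gt_eqF.
rewrite (_ : (j + i - i.+1 = j - 1)%N); last lia.
rewrite subSn // subnn (_ : 'C(1, 2) = 0%N) // addn0.
rewrite (_ : (d - i = (d - i.+1).+1)%N); last lia.
by rewrite (_ : (n - d - i.+1 + i = (n - d).-1)%N); last lia.
Qed.


Definition WB q n d j i : rat :=
  let Q := (q%:R : rat) in let K := (i - (d - j))%N in
  Q ^+ (j * (j - K - 1) + 'C(K, 2)) * Q ^+ K
  * (gauss q i (d - j) * (Q ^+ (d - j) - 1) / (Q ^+ K * Q - 1))
  * ((Q ^+ K * Q ^+ (j - K) * Q - 1) / (Q - 1))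
  * gauss q (n - d - K).-1 (n - d - j).

Lemma caseB q n d j i : (3 <= q)%N -> (1 <= j)%N -> (j <= d)%N -> (d - j <= i)%N -> (i < d)%N ->
  (2 * d <= n)%N ->
  s q n d j i.+1 (d - j) + WB q n d j i < s q n d j i (d - j).
Proof.
move=> q3 j1 jd ci id dn.
have q1 : (1 < q)%N by lia.
set Q := (q%:R : rat).
have Q3' : 3 <= Q := Q3 q q3.
have Q1 : 1 <= Q by lra.
set N := (n - d)%N.
set c := (d - j)%N.
set K := (i - c)%N.
have e1 := gaussS_m q i c q1 ci.
rewrite (_ : (i.+1 - c = K.+1)%N) in e1; last lia.
have e2 := gaussS_m q (N - K).-1 (N - j) q1 ltac:(lia).
rewrite (_ : (N - K).-1.+1 = N - K)%N in e2; last lia.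
rewrite (_ : (N - K - (N - j) = j - K)%N) in e2; last lia.
apply: (algB Q (Q ^+ (j * (j - K - 1) + 'C(K, 2))) (Q ^+ K) (Q ^+ (j - K)) (Q ^+ c)
  (Q ^+ (N - K)) (gauss q i c) (gauss q (N - K).-1 (N - j)) (gauss q (N - K) (N - j))
  (gauss q i.+1 c) _ _ _ Q3').
- by apply: exprn_gt0; lra.
- exact: exprn_ege1.
- apply: powQ => //; lia.
- exact: exprn_ege1.
- rewrite -exprD; apply: ler_weXn2l => //; lia.
- by apply: gauss_gt0; lia.
- by apply: gauss_gt0; lia.
- rewrite -(exprD Q c K) subnKC // -!exprSr; exact: e1.
- exact: e2.
- rewrite /s -/K (_ : (j + c - i = j - K)%N); last lia.
  rewrite (_ : (d - c = j)%N); last lia.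
  rewrite gauss_nn // mulr1 (_ : (n - d - i + c = N - K)%N); last lia.
  rewrite -!exprD; congr (_ ^+ _ * _ * _).
  have h1 : (j * (j - K) = j * (j - K - 1) + j)%N.
    rewrite {1}(_ : (j - K = (j - K - 1).+1)%N); last lia.
    by rewrite mulnS addnC.
  rewrite h1 subnKC; last lia.
  lia.
- rewrite /s (_ : (i.+1 - c = K.+1)%N); last lia.
  rewrite (_ : (j + c - i.+1 = j - K - 1)%N); last lia.
  rewrite (_ : (d - c = j)%N); last lia.
  rewrite gauss_nn // mulr1 (_ : (n - d - i.+1 + c = (N - K).-1)%N); last lia.
  rewrite -!exprD binS bin1; congr (_ ^+ _ * _ * _).
  lia.
- by rewrite /WB /= -/c -/K -/N.
Qed.

Lemma WB_eq q n d j i : (3 <= q)%N -> (1 <= j)%N -> (j < d)%N -> (d - j <= i)%N -> (i < d)%N ->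
  (2 * d <= n)%N ->
  s q n d j i (d - j).-1 = WB q n d j i.
Proof.
move=> q3 j1 jd ci id dn.
have q1 : (1 < q)%N by lia.
have Q1 : 1 < (q%:R : rat) by rewrite ltr1n.
set Q := (q%:R : rat) in Q1 *.
rewrite /WB /= -/Q.
set N := (n - d)%N.
set c := (d - j)%N.
set K := (i - c)%N.
have ec : c = c.-1.+1 by rewrite prednK //; rewrite /c; lia.
set c' := c.-1 in ec *.
have e1 := gaussS_l q i c' q1.
rewrite -ec (_ : (i - c' = K.+1)%N) in e1; last lia.
have ej := gaussS_m q j j q1 (leqnn j).
rewrite gauss_nn // mul1r subSn // subnn expr1 in ej.
rewrite /s.
rewrite (_ : (j + c' - i = j - K - 1)%N); last lia.
rewrite (_ : (i - c' = K.+1)%N); last lia.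
rewrite (_ : (d - c' = j.+1)%N); last lia.
rewrite (_ : (n - d - i + c' = (N - K).-1)%N); last lia.
rewrite binS bin1 exprD.
have -> : gauss q i c' = gauss q i c * (Q ^+ c - 1) / (Q ^+ K * Q - 1).
  by rewrite -exprSr e1 mulfK // (pow_sub1_neq0 _ _ Q1).
have -> : gauss q j.+1 j = (Q ^+ K * Q ^+ (j - K) * Q - 1) / (Q - 1).
  rewrite -exprD subnKC; last lia.
  by rewrite -exprSr -ej mulfK // subr_eq0 gt_eqF.
by rewrite !exprD !mulrA.
Qed.



Lemma gauss_ge0 q m l : (1 <= q)%N -> 0 <= gauss q m l.
Proof.
move=> q1; rewrite /gauss; apply: prodr_ge0 => t _.
by apply: divr_ge0; rewrite subr_ge0 exprn_ege1 // ler1n.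
Qed.

Lemma s_ge0 q n d j I h : (1 <= q)%N -> 0 <= s q n d j I h.
Proof.
move=> q1; rewrite /s.
apply: mulr_ge0; [apply: mulr_ge0; [apply: mulr_ge0|]|]; try exact: gauss_ge0.
by apply: exprn_ge0; rewrite ler0n.
Qed.

Lemma WA_ge0 q n d j i : (1 < q)%N -> 0 <= WA q n d j i.
Proof.
move=> q1; have Q1 : 1 < (q%:R : rat) by rewrite ltr1n.
rewrite /WA.
apply: mulr_ge0; [apply: mulr_ge0; [apply: mulr_ge0|]|]; try (apply: gauss_ge0; lia).
- by apply: exprn_ge0; lra.
- by apply: divr_ge0; rewrite subr_ge0 ?exprn_ege1 //; lra.
Qed.

Lemma WB_ge0 q n d j i : (1 < q)%N -> 0 <= WB q n d j i.
Proof.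
move=> q1; have Q1 : 1 < (q%:R : rat) by rewrite ltr1n.
have Q0 : 0 <= (q%:R : rat) by lra.
rewrite /WB /=.
have p1 : forall k, 1 <= (q%:R : rat) ^+ k by move=> k; apply: exprn_ege1; lra.
apply: mulr_ge0; [apply: mulr_ge0; [apply: mulr_ge0; [apply: mulr_ge0|]|]|]; try (apply: gauss_ge0; lia).
- by apply: exprn_ge0.
- by apply: exprn_ge0.
- apply: divr_ge0; first apply: mulr_ge0; try (apply: gauss_ge0; lia).
    by rewrite subr_ge0.
  have := p1 (i - (d - j))%N; nra.
- apply: divr_ge0; last lra.
  set a := _ ^+ (i - _)%N; set b := _ ^+ (j - _)%N.
  have ab : 1 <= a * b by rewrite -[1]mul1r; apply: ler_pM; rewrite ?p1 //; lra.
  nra.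
Qed.

Lemma bound_G q n d j I : (3 <= q)%N -> (1 <= j)%N -> (2 * d <= n)%N -> (I <= d)%N ->
  `|G q n d j I| <= s q n d j I (minn I (d - j)) /\
  ((I - j < minn I (d - j))%N ->
     s q n d j I (minn I (d - j)) - s q n d j I (minn I (d - j)).-1 <= `|G q n d j I|) /\
  ((I - j = minn I (d - j))%N -> `|G q n d j I| = s q n d j I (minn I (d - j))).
Proof.
move=> q3 j1 dn Id.
set top := minn I (d - j).
set lo := (I - j)%N.
have lt : (lo <= top)%N by rewrite /lo /top; lia.
set m := (top - lo)%N.
have etop : top = (lo + m)%N by rewrite /m; lia.
have eG : G q n d j I = (-1) ^+ (I - top) *
    \sum_(lo <= h < (lo + m)%N.+1) (-1) ^+ (lo + m - h)%N * s q n d j I h.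
  rewrite G_sum -/top -/lo mulr_sumr -etop.
  apply: eq_big_nat => h /andP[_ hh].
  rewrite mulrA -exprD; congr (_ ^+ _ * _); lia.
have [/andP[T0 T1] T2] := alt_sum (s q n d j I) lo m
  ltac:(move=> h; rewrite /m /lo /top => hh; apply: mono_s => //; lia)
  (s_ge0 q n d j I lo ltac:(lia)).
rewrite eG normrM normrX normrN1 expr1n mul1r ger0_norm //.
rewrite -etop in T1 T2 *.
split; first exact: T1.
split; first by move=> h; apply: T2; lia.
move=> e.
have m0 : m = 0%N by lia.
by rewrite e big_nat1 subnn expr0 mul1r.
Qed.

Theorem theorem3p4 (q n d : nat) :
  (exists p k : nat, [/\ prime p, (0 < k)%N & q = (p ^ k)%N]) ->
  (3 <= q)%N -> (1 <= d)%N -> (2 * d <= n)%N ->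
  forall i j : nat, (i <= d - 1)%N -> (1 <= j <= d)%N ->
  `|G q n d j i.+1| < `|G q n d j i|.
Proof.
move=> _ q3 d1 dn i j id /andP[j1 jd].
have q1 : (1 < q)%N by lia.
have [B1 _] := bound_G q n d j i.+1 q3 j1 dn ltac:(lia).
have [_ [B2 B3]] := bound_G q n d j i q3 j1 dn ltac:(lia).
case: (leqP (i.+1 + j) d) => hA.
- have t1 : minn i.+1 (d - j) = i.+1 by lia.
  have t0 : minn i (d - j) = i by lia.
  rewrite t1 in B1; rewrite t0 in B2 B3.
  have cA := caseA q n d j i q3 j1 hA dn.
  apply: (le_lt_trans B1).
  case: i id hA t1 t0 B1 B2 B3 cA => [|i'] id hA t1 t0 B1 B2 B3 cA.
    rewrite B3; last lia.
    have := WA_ge0 q n d j 0 q1; lra.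
  have := B2 ltac:(lia).
  rewrite (WA_eq q n d j i' q3 j1 ltac:(lia) dn) /=.
  lra.
- have t1 : minn i.+1 (d - j) = (d - j)%N by lia.
  have t0 : minn i (d - j) = (d - j)%N by lia.
  rewrite t1 in B1; rewrite t0 in B2 B3.
  have cB := caseB q n d j i q3 j1 jd ltac:(lia) ltac:(lia) dn.
  apply: (le_lt_trans B1).
  case: (ltnP j d) => hj.
    have := B2 ltac:(lia).
    rewrite (WB_eq q n d j i q3 j1 hj ltac:(lia) ltac:(lia) dn).
    lra.
  rewrite B3; last lia.
  have := WB_ge0 q n d j i q1; lra.
Qed.
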